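(* Let $g_n:=n^{3/2}$ for $n\in\mathbb{N}_0$, and define the sequence $\{\zeta_n\}_{n\in\mathbb{N}}$ by $\zeta_1:=\frac{4g_2-g_3}{g_1}=8\sqrt2-3\sqrt3$ and, for $n\ge2$, \[ \zeta_n:=\frac{g_{n+1}}{g_n}\left(4-\frac{g_{n+2}}{g_{n+1}}-\frac{g_{n-1}}{g_n}-\frac{g_{n+1}}{g_n}\frac{1}{\zeta_{n-1}}\right). \] Then the sequence is well defined (i.e. $\zeta_n\ne0$ for all $n$) and for all $n\in\mathbb{N}$, \[ \Big(1+\frac2n\Big)^{3/2}<\zeta_n<\Big(1+\frac3n\Big)^{3/2}. \] In particular $\zeta_n>0$ for all $n\in\mathbb{N}$. *)

(* Defs.v *)
From Stdlib Require Import Reals Lra.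
Open Scope R_scope.

(* g_n = n^{3/2}, written n * sqrt n so that g_0 = 0 holds literally. *)
Definition g (n : nat) : R := INR n * sqrt (INR n).

(* zeta_seq k = zeta_{k+1}  (index shift, paper's indices start at 1). *)
Fixpoint zeta_seq (k : nat) : R :=
  match k with
  | O => (4 * g 2 - g 3) / g 1
  | S k' =>
      let n := S k in
      (g (n + 1) / g n) *
        (4 - g (n + 2) / g (n + 1) - g (n - 1) / g n
           - (g (n + 1) / g n) * (1 / zeta_seq k'))
  end.

(* zeta n for n >= 1 as in the paper; zeta 0 is a junk value. *)
Definition zeta (n : nat) : R := zeta_seq (n - 1).

(* Main.v *)
Require Import Defs.
From Stdlib Require Import Reals Lra Psatz Lia.
Open Scope R_scope.

Lemma sq_le a s : 0 <= s -> a*a <= s*s -> a <= s.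
Proof. intros. nra. Qed.
Lemma sq_ge a s : 0 <= a -> s*s <= a*a -> s <= a.
Proof. intros. nra. Qed.

Lemma sqrt_bnds x s : 0 <= x <= 3/2 -> 0 <= s -> s*s = 1+x ->
  1 + x/2 - x*x/8 <= s <= 1 + x/2 - x*x/8 + x*x*x/16.
Proof.
  intros Hx Hs Hss. split.
  - apply sq_le; auto. rewrite Hss.
    assert (H: (1 + x / 2 - x * x / 8) * (1 + x / 2 - x * x / 8) = 1 + x - x*x*x*(8 - x)/64) by field.
    rewrite H. assert (0 <= x*x*x*(8-x)) by (apply Rmult_le_pos; [|lra]; repeat apply Rmult_le_pos; lra). lra.
  - apply sq_ge. nra. rewrite Hss.
    assert (H: (1 + x / 2 - x * x / 8 + x*x*x/16) * (1 + x / 2 - x * x / 8 + x*x*x/16) = 1 + x + (x*x)*(x*x)*((x*x+4*(1-x)+16)/256)) by field.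
    rewrite H. assert (0 <= (x*x)*(x*x)*((x*x+4*(1-x)+16)/256)); [|lra].
    apply Rmult_le_pos. nra. assert (0 <= x*x) by nra. assert (x*x + 4*(1-x) + 16 >= 0) by nra. lra.
Qed.

Lemma sqrtm_bnds t s : 0 < t <= 1/2 -> 0 <= s -> s*s = 1-t ->
  1 - t/2 - t*t/8 - t*t*t/8 <= s <= 1 - t/2 - t*t/8.
Proof.
  intros Ht Hs Hss. split.
  - apply sq_le; auto. rewrite Hss.
    assert (H: (1 - t/2 - t*t/8 - t*t*t/8) * (1 - t/2 - t*t/8 - t*t*t/8) = 1 - t + t*t*t*(-1/8 + 9*t/64 + t*t/32 + t*t*t/64)) by field.
    rewrite H. assert (0 < t*t*t) by (repeat apply Rmult_lt_0_compat; lra).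
    assert (t*t <= 1/4) by nra. assert (t*t*t <= 1/8) by nra.
    assert (-1/8 + 9*t/64 + t*t/32 + t*t*t/64 < 0) by lra. nra.
  - apply sq_ge. nra. rewrite Hss.
    assert (H: (1 - t/2 - t*t/8) * (1 - t/2 - t*t/8) = 1 - t + t*t*t/8 + t*t*t*t/64) by field.
    rewrite H. assert (0 < t*t*t) by (repeat apply Rmult_lt_0_compat; lra). nra.
Qed.
Definition lo x := 1 + x/2 - x*x/8.
Definition hi x := 1 + x/2 - x*x/8 + x*x*x/16.
Definition lom t := (1-t)*(1 - t/2 - t*t/8 - t*t*t/8).
Definition him t := (1-t)*(1 - t/2 - t*t/8).

Lemma pw t k : 0 < t <= 1/2 -> 0 <= t^k <= (1/2)^k.
Proof. intros. split. apply pow_le; lra. apply pow_incr; lra. Qed.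

Ltac pws t H := 
  let f k := (let h := fresh in pose proof (pw t k H) as h; simpl in h) in
  f 1%nat; f 2%nat; f 3%nat; f 4%nat; f 5%nat; f 6%nat; f 7%nat; f 8%nat; f 9%nat; f 10%nat.

Lemma PL t : 0 < t <= 1/2 -> (1+t)*lo t * (2 - him t) - (1+2*t)*hi (2*t) > 0.
Proof.
  intro Ht.
  assert (E: (1+t)*lo t * (2 - him t) - (1+2*t)*hi (2*t) = t^2 * ((3/4)*t^0 + (1/4)*t^1 + (-97/64)*t^2 + (1/64)*t^4)).
  { unfold lo, hi, him; field. }
  rewrite E. apply Rmult_lt_0_compat. apply pow_lt; lra.
  pws t Ht. simpl. lra.
Qed.

Lemma PB t : 0 < t <= 1/2 -> (1+t)*lo t * (4 - him t) - (1+3*t)*hi (3*t) > 0.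
Proof.
  intro Ht.
  assert (E: (1+t)*lo t * (4 - him t) - (1+3*t)*hi (3*t) = (2)*t^0 + (3/2)*t^1 + (-3/8)*t^2 + (19/16)*t^3 + (-357/64)*t^4 + (1/64)*t^6).
  { unfold lo, hi, him; field. }
  rewrite E. pws t Ht. simpl. lra.
Qed.

Lemma PU t : 0 < t <= 1/2 -> (1+2*t)*hi (2*t) * ((1+t)*hi t * (4 - lom t) - (1+3*t)*lo (3*t)) - (1+2*t)^3 - (1+t)^3*lom t < 0.
Proof.
  intro Ht.
  assert (E: (1+2*t)*hi (2*t) * ((1+t)*hi t * (4 - lom t) - (1+3*t)*lo (3*t)) - (1+2*t)^3 - (1+t)^3*lom t = - (t^2 * ((15/4)*t^0 + (37/16)*t^1 + (-661/64)*t^2 + (-657/128)*t^3 + (369/128)*t^4 + (-727/256)*t^5 + (29/128)*t^6 + (3/64)*t^7 + (11/128)*t^8 + (-3/256)*t^9 + (1/128)*t^10))).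
  { unfold lo, hi, lom; field. }
  rewrite E. apply Ropp_lt_gt_0_contravar. apply Rmult_lt_0_compat. apply pow_lt; lra.
  pws t Ht. simpl. lra.
Qed.

Lemma core t s1 s2 s3 sm z : 0 < t <= 1/2 ->
  0 <= s1 -> s1*s1 = 1+t -> 0 <= s2 -> s2*s2 = 1+2*t ->
  0 <= s3 -> s3*s3 = 1+3*t -> 0 <= sm -> sm*sm = 1-t ->
  ((1+t)*s1)/((1-t)*sm) < z < ((1+2*t)*s2)/((1-t)*sm) ->
  (1+2*t)*s2 < 4*((1+t)*s1) - (1+2*t)*s2 - ((1+t)*s1)*((1-t)*sm) - ((1+t)*s1)*((1+t)*s1)/z
   < (1+3*t)*s3.
Proof.
  intros Ht H1 E1 H2 E2 H3 E3 Hm Em Hz.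
  pose proof (sqrt_bnds t s1 ltac:(lra) H1 E1) as B1.
  pose proof (sqrt_bnds (2*t) s2 ltac:(lra) H2 ltac:(lra)) as B2.
  pose proof (sqrt_bnds (3*t) s3 ltac:(lra) H3 ltac:(lra)) as B3.
  pose proof (sqrtm_bnds t sm Ht Hm Em) as Bm.
  pose proof (PL t Ht) as PL. pose proof (PB t Ht) as PB. pose proof (PU t Ht) as PU.
  set (P1 := (1+t)*s1) in *. set (P2 := (1+2*t)*s2) in *. set (P3 := (1+3*t)*s3) in *.
  set (Pm := (1-t)*sm) in *.
  assert (Q1 : P1*P1 = (1+t)^3).
  { replace (P1*P1) with ((1+t)*(1+t)*(s1*s1)) by (unfold P1; ring). rewrite E1; ring. }
  assert (Q2 : P2*P2 = (1+2*t)^3).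
  { replace (P2*P2) with ((1+2*t)*(1+2*t)*(s2*s2)) by (unfold P2; ring). rewrite E2; ring. }
  assert (Hlo1 : (1+t)*lo t <= P1 <= (1+t)*hi t) by (unfold P1, lo, hi; split; apply Rmult_le_compat_l; lra).
  assert (Hlo2 : (1+2*t)*lo (2*t) <= P2 <= (1+2*t)*hi (2*t)) by (unfold P2, lo, hi; split; apply Rmult_le_compat_l; lra).
  assert (Hlo3 : (1+3*t)*lo (3*t) <= P3 <= (1+3*t)*hi (3*t)) by (unfold P3, lo, hi; split; apply Rmult_le_compat_l; lra).
  assert (Hlom : lom t <= Pm <= him t) by (unfold Pm, lom, him; split; apply Rmult_le_compat_l; lra).
  assert (t*t <= 1/4) by (clear -Ht; nra). assert (t*t*t <= 1/8) by (clear -Ht; nra).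
  assert (0 <= t*t) by (clear -Ht; nra). assert (0 <= t*t*t) by (clear -Ht; apply Rmult_le_pos; nra).
  assert (lo t > 0) by (unfold lo; lra).
  assert (lo (2*t) > 0) by (unfold lo; lra).
  assert (lo (3*t) > 0) by (unfold lo; lra).
  assert (lom t > 0) by (unfold lom; apply Rmult_lt_0_compat; lra).
  assert (him t < 1) by (unfold him; clear -Ht; nra).
  assert (0 <= hi t) by (unfold hi; lra).
  assert (0 <= hi (2*t)) by (unfold hi; lra).
  assert (0 < (1+t)*lo t) by (apply Rmult_lt_0_compat; lra).
  assert (0 < (1+2*t)*lo (2*t)) by (apply Rmult_lt_0_compat; lra).
  assert (HP1 : P1 > 0) by lra. assert (HP2 : P2 > 0) by lra. assert (HPm : Pm > 0) by lra.
  assert (LM : P1*(2-Pm) - P2 > 0).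
  { assert ((1+t)*lo t * (2 - him t) <= P1*(2-Pm)) by (apply Rmult_le_compat; lra). lra. }
  assert (BB : P1*(4-Pm) - P3 > 0).
  { assert ((1+t)*lo t * (4 - him t) <= P1*(4-Pm)) by (apply Rmult_le_compat; lra). lra. }
  assert (UM : P2*(P1*(4-Pm) - P3) - (1+2*t)^3 - (1+t)^3*Pm < 0).
  { assert (P1*(4-Pm) <= (1+t)*hi t * (4 - lom t)) by (apply Rmult_le_compat; lra).
    assert (P2*(P1*(4-Pm) - P3) <= (1+2*t)*hi (2*t) * ((1+t)*hi t * (4 - lom t) - (1+3*t)*lo (3*t)))
      by (apply Rmult_le_compat; lra).
    assert ((1+t)^3*lom t <= (1+t)^3*Pm) by (apply Rmult_le_compat_l; [apply pow_le|]; lra).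
    lra. }
  clear - Hz HP1 HP2 HPm LM UM Q1 Q2.
  destruct Hz as [Hz1 Hz2].
  assert (Hz1' : P1 < z*Pm) by (apply (Rmult_lt_compat_r Pm) in Hz1; [|lra]; field_simplify in Hz1; lra).
  assert (Hz2' : z*Pm < P2) by (apply (Rmult_lt_compat_r Pm) in Hz2; [|lra]; field_simplify in Hz2; lra).
  assert (Hz : z > 0) by nra.
  split.
  - assert (P1*P1/z < P1*Pm).
    { apply (Rmult_lt_reg_r z); [lra|]. field_simplify; [|lra]. nra. }
    lra.
  - assert (P1*P1/z > P1*P1*Pm/P2).
    { assert (E: P1*P1/z - P1*P1*Pm/P2 = P1*P1*(P2 - z*Pm)/(z*P2)) by (field; lra).
      assert (0 < P1*P1*(P2 - z*Pm)/(z*P2)). { apply Rdiv_lt_0_compat. apply Rmult_lt_0_compat; nra. nra. }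
      lra. }
    assert (4*P1 - P2 - P1*Pm - P1*P1*Pm/P2 <= P3); [|lra].
    apply (Rmult_le_reg_r P2); [lra|]. field_simplify; [|lra]. nra.
Qed.
Lemma Rpow32 x : 0 < x -> Rpower x (3/2) = x * sqrt x.
Proof.
  intro Hx. replace (3/2) with (1 + /2) by field.
  rewrite Rpower_plus, Rpower_1 by auto. rewrite Rpower_sqrt by auto. reflexivity.
Qed.

Lemma scale N a : 0 < N -> 0 <= 1 + a*/N ->
  (N+a)*sqrt(N+a) = (N*sqrt N) * ((1+a*/N)*sqrt(1+a*/N)).
Proof.
  intros HN Ha. replace (N+a) with (N*(1+a*/N)) by (field; lra).
  rewrite sqrt_mult_alt by lra. ring.
Qed.

Lemma step N z : 2 <= N ->
  Rpower (1+2/(N-1)) (3/2) < z < Rpower (1+3/(N-1)) (3/2) ->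
  Rpower (1+2/N) (3/2) <
  ((N+1)*sqrt(N+1))/(N*sqrt N) * (4 - ((N+2)*sqrt(N+2))/((N+1)*sqrt(N+1))
     - ((N-1)*sqrt(N-1))/(N*sqrt N) - ((N+1)*sqrt(N+1))/(N*sqrt N) * (1/z))
  < Rpower (1+3/N) (3/2).
Proof.
  intros HN Hz.
  set (t := /N).
  assert (Ht : 0 < t <= 1/2).
  { unfold t. split. apply Rinv_0_lt_compat; lra.
    replace (1/2) with (/2) by field. apply Rinv_le_contravar; lra. }
  assert (HNt : N = /t) by (unfold t; rewrite Rinv_inv; reflexivity).
  assert (e1 : 1 + 2/(N-1) = (1+1*t)/(1+ -1*t)) by (rewrite HNt; field; lra).
  assert (e2 : 1 + 3/(N-1) = (1+2*t)/(1+ -1*t)) by (rewrite HNt; field; lra).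
  assert (e3 : 1 + 2/N = 1+2*t) by (rewrite HNt; field; lra).
  assert (e4 : 1 + 3/N = 1+3*t) by (rewrite HNt; field; lra).
  rewrite e1, e2 in Hz. rewrite e3, e4.
  rewrite !Rpow32 in * by (try apply Rdiv_lt_0_compat; lra).
  rewrite !sqrt_div_alt in Hz by lra.
  replace (N-1) with (N + -1) by ring.
  rewrite (scale N 1), (scale N 2), (scale N (-1)) by (try lra; fold t; lra).
  fold t.
  set (s1 := sqrt (1 + 1*t)) in *. set (s2 := sqrt (1 + 2*t)) in *.
  set (s3 := sqrt (1 + 3*t)) in *. set (sm := sqrt (1 + -1*t)) in *.
  assert (H1 : 0 < s1) by (apply sqrt_lt_R0; lra).
  assert (H2 : 0 < s2) by (apply sqrt_lt_R0; lra).
  assert (H3 : 0 < s3) by (apply sqrt_lt_R0; lra).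
  assert (Hm : 0 < sm) by (apply sqrt_lt_R0; lra).
  assert (E1 : s1*s1 = 1+t) by (unfold s1; rewrite sqrt_sqrt; lra).
  assert (E2 : s2*s2 = 1+2*t) by (unfold s2; rewrite sqrt_sqrt; lra).
  assert (E3 : s3*s3 = 1+3*t) by (unfold s3; rewrite sqrt_sqrt; lra).
  assert (Em : sm*sm = 1-t) by (unfold sm; rewrite sqrt_sqrt; lra).
  assert (HK : 0 < N * sqrt N) by (apply Rmult_lt_0_compat; [lra| apply sqrt_lt_R0; lra]).
  set (K := N * sqrt N) in *.
  assert (Hz' : ((1+t)*s1)/((1-t)*sm) < z < ((1+2*t)*s2)/((1-t)*sm)).
  { replace (((1+t)*s1)/((1-t)*sm)) with ((1 + 1 * t) / (1 + -1 * t) * (s1 / sm)) by (field; lra).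
    replace (((1+2*t)*s2)/((1-t)*sm)) with ((1 + 2 * t) / (1 + -1 * t) * (s2 / sm)) by (field; lra).
    exact Hz. }
  pose proof (core t s1 s2 s3 sm z Ht ltac:(lra) E1 ltac:(lra) E2 ltac:(lra) E3 ltac:(lra) Em Hz') as C.
  assert (Hzp : z <> 0).
  { assert (0 < ((1+t)*s1)/((1-t)*sm)) by (apply Rdiv_lt_0_compat; apply Rmult_lt_0_compat; lra). lra. }
  replace (K * ((1 + 1 * t) * s1) / K * (4 - K * ((1 + 2 * t) * s2) / (K * ((1 + 1 * t) * s1)) -
      K * ((1 + -1 * t) * sm) / K - K * ((1 + 1 * t) * s1) / K * (1 / z)))
   with (4*((1+t)*s1) - (1+2*t)*s2 - ((1+t)*s1)*((1-t)*sm) - ((1+t)*s1)*((1+t)*s1)/z)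
   by (field; repeat split; lra).
  exact C.
Qed.

Lemma zeta_S k : zeta_seq (S k) =
  (g (S (S k) + 1) / g (S (S k))) *
  (4 - g (S (S k) + 2) / g (S (S k) + 1) - g (S (S k) - 1) / g (S (S k))
     - (g (S (S k) + 1) / g (S (S k))) * (1 / zeta_seq k)).
Proof. reflexivity. Qed.

Lemma main k : Rpower (1 + 2 / INR (S k)) (3/2) < zeta_seq k /\
               zeta_seq k < Rpower (1 + 3 / INR (S k)) (3/2).
Proof.
  induction k as [|k IH].
  - simpl zeta_seq. unfold g.
    replace (INR 1) with 1 by reflexivity.
    replace (INR 2) with 2 by (simpl; ring).
    replace (INR 3) with 3 by (simpl; ring).
    replace (1 + 2/1) with 3 by field. replace (1 + 3/1) with 4 by field.
    rewrite !Rpow32 by lra. rewrite sqrt_1.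
    assert (S4 : sqrt 4 = 2) by (replace 4 with (2*2) by ring; apply sqrt_square; lra). rewrite S4.
    pose proof (sqrt_sqrt 2 ltac:(lra)). pose proof (sqrt_sqrt 3 ltac:(lra)).
    pose proof (sqrt_pos 2). pose proof (sqrt_pos 3).
    replace ((4 * (2 * sqrt 2) - 3 * sqrt 3) / (1 * 1)) with (8 * sqrt 2 - 3 * sqrt 3) by field.
    assert (sqrt 3 > 17/10) by nra.
    split; nra.
  - rewrite zeta_S. unfold g.
    rewrite !plus_INR.
    replace (S (S k) - 1)%nat with (S k) by lia.
    replace (INR (S k)) with (INR (S (S k)) - 1) in * by (rewrite (S_INR (S k)); ring).
    replace (INR 1) with 1 by reflexivity. replace (INR 2) with 2 by (simpl; ring).
    apply step.
    + rewrite !S_INR. pose proof (pos_INR k). lra.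
    + exact IH.
Qed.

Theorem lemma3p1 :
  (forall n : nat, (1 <= n)%nat -> zeta n <> 0) /\
  (forall n : nat, (1 <= n)%nat ->
     Rpower (1 + 2 / INR n) (3 / 2) < zeta n /\
     zeta n < Rpower (1 + 3 / INR n) (3 / 2)).
Proof.
  assert (M : forall n : nat, (1 <= n)%nat ->
     Rpower (1 + 2 / INR n) (3 / 2) < zeta n /\
     zeta n < Rpower (1 + 3 / INR n) (3 / 2)).
  { intros n Hn. destruct n as [|k]; [lia|]. unfold zeta.
    replace (S k - 1)%nat with k by lia. apply main. }
  split; [|exact M].
  intros n Hn. destruct (M n Hn) as [H _].
  assert (0 < Rpower (1 + 2 / INR n) (3 / 2)) by apply exp_pos.
  lra.
Qed.
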